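(* Let $\mathtt Q$ be a probability measure and $(M_t)_{t\in\mathbb N_0}$ a nonnegative $\mathtt Q$-martingale with $M_0>0$. Let $F$ be the distribution function under $\mathtt Q$ of $\inf_{t\in\mathbb N_0}1/M_t$. If $F$ is atomless (continuous), then $\mathfrak p_t:=F(\inf_{s\le t}1/M_s)$, $t\in\mathbb N_0$, is a $\mathtt Q$-admissible anytime-valid $p$-value for $\{\mathtt Q\}$.
   Context: Setup: observations $(X_t)_{t\in\mathbb N}$, an independent $[0,1]$-uniform $U$, filtration $\mathcal F_0=\sigma(U)$, $\mathcal F_t=\sigma(U,X_1,\dots,X_t)$, $\mathcal F_\infty=\sigma(\bigcup_t\mathcal F_t)$; stopping times may be infinite. An anytime-valid $p$-value for $\{\mathtt Q\}$ is an adapted $[0,1]$-valued $(\mathfrak p_t)_{t\in\mathbb N_0}$ with $\mathtt Q(\mathfrak p_\tau\le\alpha)\le\alpha$ for all stopping times $\tau$ and $\alpha\in[0,1]$, where $\mathfrak p_\infty:=\liminf_t\mathfrak p_t$. It is $\mathtt Q$-admissible if there is no other such $p$-value $(\mathfrak p'_t)$ with $\mathtt Q(\mathfrak p'_t\le\mathfrak p_t)=1$ for all $t$ and $\mathtt Q(\mathfrak p'_t<\mathfrak p_t)>0$ for some $t$. *)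

(* Defs.v *)
From HB Require Import structures.
From mathcomp Require Import all_boot all_order all_algebra.
From mathcomp Require Import all_classical all_reals all_analysis.
Set Implicit Arguments. Unset Strict Implicit. Unset Printing Implicit Defensive.
Import Order.TTheory GRing.Theory Num.Theory.
Import numFieldNormedType.Exports.
Local Open Scope classical_set_scope.
Local Open Scope ring_scope.

Section Defs.
Context {d dT : measure_display} {Omega : measurableType d} {T : measurableType dT}
  {R : realType}.

Definition gen_sigma (G : set (set Omega)) : set (set Omega) :=
  smallest (sigma_algebra setT) G.

Definition filt (U : Omega -> R) (X : nat -> Omega -> T) (t : nat) : set (set Omega) :=
  gen_sigma [set A | (exists B : set R, measurable B /\ A = U @^-1` B) \/
                     (exists (i : nat) (B : set T),
                        (1 <= i <= t)%N /\ measurable B /\ A = X i @^-1` B)].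

Definition sigmaX (X : nat -> Omega -> T) : set (set Omega) :=
  gen_sigma [set A | exists (i : nat) (B : set T),
                        (1 <= i)%N /\ measurable B /\ A = X i @^-1` B].

Definition measurable_wrt (G : set (set Omega)) (f : Omega -> R) : Prop :=
  forall B : set R, measurable B -> G (f @^-1` B).

Definition uniform01 (Q : probability Omega R) (U : Omega -> R) : Prop :=
  forall x : R, 0 <= x <= 1 -> Q [set w | U w <= x] = x%:E.

Definition indep_U_X (Q : probability Omega R) (U : Omega -> R)
  (X : nat -> Omega -> T) : Prop :=
  forall (A : set R) (E : set Omega), measurable A -> sigmaX X E ->
    Q (U @^-1` A `&` E) = (Q (U @^-1` A) * Q E)%E.

(** stopping time, possibly infinite (None = +oo) *)
Definition stopping_time (F : nat -> set (set Omega)) (tau : Omega -> option nat) : Prop :=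
  forall t : nat, F t [set w | exists s : nat, tau w = Some s /\ (s <= t)%N].

Definition stopped (p : nat -> Omega -> R) (tau : Omega -> option nat) (w : Omega) : R :=
  match tau w with
  | Some t => p t w
  | None => limn_inf (fun t => p t w)
  end.

Definition anytime_valid (Q : probability Omega R) (F : nat -> set (set Omega))
  (p : nat -> Omega -> R) : Prop :=
  (forall t, measurable_wrt (F t) (p t)) /\
  (forall t w, 0 <= p t w <= 1) /\
  (forall tau, stopping_time F tau ->
     forall alpha : R, 0 <= alpha <= 1 ->
       (Q [set w | (stopped p tau w <= alpha)%R] <= alpha%:E)%E).

Definition admissible (Q : probability Omega R) (F : nat -> set (set Omega))
  (p : nat -> Omega -> R) : Prop :=
  ~ exists p' : nat -> Omega -> R,
      anytime_valid Q F p' /\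
      (forall t, Q [set w | p' t w <= p t w] = 1%E) /\
      (exists t, (0 < Q [set w | (p' t w < p t w)%R])%E).

Definition martingale (Q : probability Omega R) (F : nat -> set (set Omega))
  (M : nat -> Omega -> R) : Prop :=
  forall t : nat,
    measurable_wrt (F t) (M t) /\
    Q.-integrable setT (fun w => (M t w)%:E) /\
    (forall A, F t A ->
       (\int[Q]_(w in A) (M t.+1 w)%:E = \int[Q]_(w in A) (M t w)%:E)%E).

Definition inv_e (x : R) : \bar R := if x == 0 then +oo%E else (x^-1)%:E.

Definition inf_inv (M : nat -> Omega -> R) (w : Omega) : \bar R :=
  ereal_inf (range (fun t => inv_e (M t w))).

Definition inf_inv_upto (M : nat -> Omega -> R) (t : nat) (w : Omega) : \bar R :=
  ereal_inf [set inv_e (M s w) | s in [set s : nat | (s <= t)%N]].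

Definition cdf_inf_inv (Q : probability Omega R) (M : nat -> Omega -> R) (x : R) : R :=
  fine (Q [set w | (inf_inv M w <= x%:E)%E]).

(** p_t := F(inf_{s<=t} 1/M_s) (finite since M_0 > 0) *)
Definition pval (Q : probability Omega R) (M : nat -> Omega -> R) (t : nat) (w : Omega) : R :=
  cdf_inf_inv Q M (fine (inf_inv_upto M t w)).

End Defs.

(* Main.v *)
Require Import Defs.
From HB Require Import structures.
From mathcomp Require Import all_boot all_order all_algebra.
From mathcomp Require Import all_classical all_reals all_analysis.
From mathcomp Require Import measurable_realfun.
From mathcomp Require Import lra.
Import Order.TTheory GRing.Theory Num.Theory.
Import numFieldNormedType.Exports.
Local Open Scope classical_set_scope.
Local Open Scope ring_scope.


Section Basic.
Context {d : measure_display} {Omega : measurableType d} {R : realType}.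
Context (M : nat -> Omega -> R).
Hypothesis Hnonneg : forall t w, 0 <= M t w.
Hypothesis HM0 : forall w, 0 < M 0%N w.

Lemma inv_e_ge0 (x : R) : 0 <= x -> (0 <= inv_e x)%E.
Proof. by rewrite /inv_e; case: eqP => // _ x0; rewrite lee_fin invr_ge0. Qed.

Lemma inv_e_lt (x y : R) : (inv_e x < y%:E)%E <-> x != 0 /\ x^-1 < y.
Proof. by rewrite /inv_e; case: eqP => /= [->|/eqP x0]; rewrite ?lte_fin; split => // -[]. Qed.

Lemma inf_inv_ge0 w : (0 <= inf_inv M w)%E.
Proof. by apply: le_ereal_inf_tmp => _ [s _ <-]; exact: inv_e_ge0. Qed.

Lemma inf_inv_upto_ge0 t w : (0 <= inf_inv_upto M t w)%E.
Proof. by apply: le_ereal_inf_tmp => _ [s _ <-]; exact: inv_e_ge0. Qed.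

Lemma inv_e_M0 w : inv_e (M 0%N w) = ((M 0%N w)^-1)%:E.
Proof. by rewrite /inv_e gt_eqF. Qed.

Lemma inf_inv_le0 w : (inf_inv M w <= ((M 0%N w)^-1)%:E)%E.
Proof. by rewrite -inv_e_M0; apply: ereal_inf_lbound; exists 0%N. Qed.

Lemma inf_inv_upto_le0 t w : (inf_inv_upto M t w <= ((M 0%N w)^-1)%:E)%E.
Proof. by rewrite -inv_e_M0; apply: ereal_inf_lbound; exists 0%N. Qed.

Lemma inf_inv_fin w : inf_inv M w \is a fin_num.
Proof.
by rewrite ge0_fin_numE ?inf_inv_ge0// (le_lt_trans (inf_inv_le0 w)) ?ltry.
Qed.

Lemma inf_inv_upto_fin t w : inf_inv_upto M t w \is a fin_num.
Proof.
by rewrite ge0_fin_numE ?inf_inv_upto_ge0// (le_lt_trans (inf_inv_upto_le0 t w)) ?ltry.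
Qed.

Lemma inf_inv_ltP w x : (fine (inf_inv M w) < x) <->
  exists s, M s w != 0 /\ (M s w)^-1 < x.
Proof.
rewrite -lte_fin fineK ?inf_inv_fin//; split.
  by move=> /ereal_inf_ltP[_ [s _ <-]] /inv_e_lt; exists s.
by move=> [s /inv_e_lt h]; apply/ereal_inf_ltP; exists (inv_e (M s w)) => //; exists s.
Qed.

Lemma inf_inv_upto_ltP t w x : (fine (inf_inv_upto M t w) < x) <->
  exists s, (s <= t)%N /\ M s w != 0 /\ (M s w)^-1 < x.
Proof.
rewrite -lte_fin fineK ?inf_inv_upto_fin//; split.
  by move=> /ereal_inf_ltP[_ [s st <-]] /inv_e_lt; exists s.
move=> [s [st /inv_e_lt h]]; apply/ereal_inf_ltP; exists (inv_e (M s w)) => //.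
by exists s.
Qed.


Lemma Y_le_G t w : fine (inf_inv M w) <= fine (inf_inv_upto M t w).
Proof.
rewrite fine_le ?inf_inv_fin ?inf_inv_upto_fin//.
by apply: ereal_inf_le_tmp => _ [s _ <-]; exists s.
Qed.

Lemma G_le t t' w : (t <= t')%N ->
  fine (inf_inv_upto M t' w) <= fine (inf_inv_upto M t w).
Proof.
move=> tt'; rewrite fine_le ?inf_inv_upto_fin//.
by apply: ereal_inf_le_tmp => _ [s st <-]; exists s => //=; exact: leq_trans tt'.
Qed.

Lemma G_cvg w : (fun t => fine (inf_inv_upto M t w)) @ \oo --> fine (inf_inv M w).
Proof.
apply/cvgrPdist_lt => e e0.
have [s [Ms hs]] : exists s, M s w != 0 /\ (M s w)^-1 < fine (inf_inv M w) + e.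
  by apply/inf_inv_ltP; rewrite ltrDl.
exists s => // t /= st.
rewrite ler0_norm ?subr_le0 ?Y_le_G// opprB ltrBlDl.
by apply/inf_inv_upto_ltP; exists s.
Qed.

End Basic.


Section Meas.
Context {R : realType}.

Lemma meas_from_lt {d0} {T0 : measurableType d0} (f : T0 -> R) :
  (forall x, measurable [set w | f w < x]) -> measurable_fun setT f.
Proof.
move=> h; apply: (measurability _ (measurable_realfun.RGenInftyO.measurableE R)) => //.
move=> _ [_ [x ->] <-]; rewrite setTI.
suff -> : f @^-1` `]-oo, x[ = [set w | f w < x] by [].
by apply/seteqP; split => w /=; rewrite in_itv.
Qed.

Lemma pos_inv_iff (y x : R) : 0 <= y -> (y != 0 /\ y^-1 < x) <-> (0 < x /\ x^-1 < y).
Proof.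
move=> y0; split.
  move=> [yn0 h]; have yp : 0 < y by rewrite lt0r yn0.
  have xp : 0 < x by apply: le_lt_trans h; rewrite invr_ge0.
  by split => //; rewrite invf_plt ?posrE.
move=> [xp h]; have yp : 0 < y by apply: lt_trans h; rewrite invr_gt0.
by split; [rewrite gt_eqF|rewrite invf_plt ?posrE].
Qed.

Lemma meas_lt_inv {d0} {T0 : measurableType d0} (f : T0 -> R) x :
  measurable_fun setT f -> measurable [set w | 0 < x /\ x^-1 < f w].
Proof.
move=> mf; case: (pselect (0 < x)) => x0.
  rewrite (_ : [set w | 0 < x /\ x^-1 < f w] = f @^-1` `]x^-1, +oo[); last first.
    by apply/seteqP; split => w /=; rewrite in_itv /= andbT => // -[].
  by have := mf measurableT _ (@measurable_itv _ `]x^-1, +oo[); rewrite setTI.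
rewrite (_ : [set w | 0 < x /\ x^-1 < f w] = set0) //.
by apply/seteqP; split => w //= -[].
Qed.

End Meas.

Section Filt.
Context {d dT : measure_display} {Omega : measurableType d} {T : measurableType dT}
  {R : realType}.
Context (X : nat -> Omega -> T) (U : Omega -> R).
Hypothesis HX : forall t, measurable_fun setT (X t).
Hypothesis HU : measurable_fun setT U.

Definition gens (t : nat) : set (set Omega) :=
  [set A | (exists B : set R, measurable B /\ A = U @^-1` B) \/
           (exists (i : nat) (B : set T),
              (1 <= i <= t)%N /\ measurable B /\ A = X i @^-1` B)].

Lemma filtE t : filt U X t = @measurable _ (g_sigma_algebraType (gens t)).
Proof. by []. Qed.

Lemma filt_meas t A : filt U X t A -> measurable A.
Proof.
apply: smallest_sub; first exact: sigma_algebra_measurable.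
move=> _ [[B [mB ->]]|[i [B [_ [mB ->]]]]].
  by rewrite -(setTI (U @^-1` B)); exact: HU.
by rewrite -(setTI (X i @^-1` B)); exact: HX.
Qed.

Lemma filt_mono t t' : (t <= t')%N -> filt U X t `<=` filt U X t'.
Proof.
move=> tt'; apply: sub_smallest2r; first exact: smallest_sigma_algebra.
move=> _ [[B [mB ->]]|[i [B [/andP[i1 it] [mB ->]]]]]; first by left; exists B.
by right; exists i, B; split => //; rewrite i1 /= (leq_trans it).
Qed.

Lemma wrtE t (f : Omega -> R) :
  measurable_wrt (filt U X t) f <->
  measurable_fun (setT : set (g_sigma_algebraType (gens t))) f.
Proof.
split => h.
  by move=> _ B mB; rewrite setTI; exact: h.
by move=> B mB; have := h measurableT B mB; rewrite setTI.
Qed.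

Lemma wrt_mono s t (f : Omega -> R) : (s <= t)%N -> measurable_wrt (filt U X s) f ->
  measurable_wrt (filt U X t) f.
Proof. by move=> st h B mB; apply: filt_mono st _ (h B mB). Qed.

Lemma wrt_meas t (f : Omega -> R) : measurable_wrt (filt U X t) f -> measurable_fun setT f.
Proof. by move=> h _ B mB; rewrite setTI; apply: filt_meas; exact: h. Qed.

End Filt.

Section GMeas.
Context {d dT : measure_display} {Omega : measurableType d} {T : measurableType dT}
  {R : realType}.
Context (X : nat -> Omega -> T) (U : Omega -> R) (M : nat -> Omega -> R).
Hypothesis Hnonneg : forall t w, 0 <= M t w.
Hypothesis HM0 : forall w, 0 < M 0%N w.

Lemma G_wrt (HMw : forall s, measurable_wrt (filt U X s) (M s)) t :
  measurable_wrt (filt U X t) (fun w => fine (inf_inv_upto M t w)).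
Proof.
apply/wrtE; apply: meas_from_lt => x.
rewrite (_ : [set w | _ < x] = \bigcup_(s in [set s | (s <= t)%N])
    [set w | 0 < x /\ x^-1 < M s w]).
  apply: bigcup_measurable => s st; apply: meas_lt_inv.
  by apply/wrtE; exact: wrt_mono st (HMw s).
apply/seteqP; split => w /=.
  move/(inf_inv_upto_ltP M Hnonneg HM0) => [s [st h]].
  by exists s => //; apply/pos_inv_iff.
move=> [s st h]; apply/(inf_inv_upto_ltP M Hnonneg HM0); exists s; split => //.
by apply/pos_inv_iff.
Qed.

Lemma Y_meas (HMm : forall s, measurable_fun setT (M s)) :
  measurable_fun setT (fun w => fine (inf_inv M w)).
Proof.
apply: meas_from_lt => x.
rewrite (_ : [set w | _ < x] = \bigcup_s [set w | 0 < x /\ x^-1 < M s w]).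
  by apply: bigcupT_measurable => s; apply: meas_lt_inv.
apply/seteqP; split => w /=.
  move/(inf_inv_ltP M Hnonneg HM0) => [s h].
  by exists s => //; apply/pos_inv_iff.
move=> [s _ h]; apply/(inf_inv_ltP M Hnonneg HM0); exists s.
by apply/pos_inv_iff.
Qed.

End GMeas.


Section Gen.
Context {R : realType}.

Lemma mset_le {d0} {T0 : measurableType d0} (f : T0 -> R) x :
  measurable_fun setT f -> measurable [set w | f w <= x].
Proof.
move=> mf; rewrite (_ : [set w | f w <= x] = f @^-1` `]-oo, x]).
  by have := mf measurableT _ (@measurable_itv _ `]-oo, x]); rewrite setTI.
by apply/seteqP; split => w /=; rewrite in_itv.
Qed.

Lemma mset_lt {d0} {T0 : measurableType d0} (f : T0 -> R) x :
  measurable_fun setT f -> measurable [set w | f w < x].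
Proof.
move=> mf; rewrite (_ : [set w | f w < x] = f @^-1` `]-oo, x[).
  by have := mf measurableT _ (@measurable_itv _ `]-oo, x[); rewrite setTI.
by apply/seteqP; split => w /=; rewrite in_itv.
Qed.

Lemma mset_gt {d0} {T0 : measurableType d0} (f : T0 -> R) x :
  measurable_fun setT f -> measurable [set w | x < f w].
Proof.
move=> mf; rewrite (_ : [set w | x < f w] = f @^-1` `]x, +oo[).
  by have := mf measurableT _ (@measurable_itv _ `]x, +oo[); rewrite setTI.
by apply/seteqP; split => w /=; rewrite in_itv /= andbT.
Qed.

Lemma cont_ball (f : R -> R) x e : continuous f -> 0 < e ->
  exists2 del, 0 < del & forall y, `|x - y| < del -> `|f x - f y| < e.
Proof.
move=> cf e0; have /cvgrPdist_lt /(_ e e0) := cf x.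
by move=> /nbhs_ballP [del del0 h]; exists del => // y xy; apply: h.
Qed.

End Gen.

Section CDF.
Context {d : measure_display} {Omega : measurableType d} {R : realType}.
Context (Q : probability Omega R) (M : nat -> Omega -> R).
Hypothesis Hnonneg : forall t w, 0 <= M t w.
Hypothesis HM0 : forall w, 0 < M 0%N w.
Hypothesis HMm : forall s, measurable_fun setT (M s).
Hypothesis Hcont : continuous (cdf_inf_inv Q M).

Local Notation Y := (fun w => fine (inf_inv M w)).
Local Notation F := (cdf_inf_inv Q M).

Lemma Ymeas : measurable_fun setT Y.
Proof. exact: Y_meas. Qed.

Lemma Y_ge0 w : 0 <= Y w.
Proof. by rewrite fine_ge0 // inf_inv_ge0. Qed.

Lemma Yle_set x : [set w | (inf_inv M w <= x%:E)%E] = [set w | Y w <= x].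
Proof.
by apply/seteqP; split => w /=; rewrite -lee_fin fineK // inf_inv_fin.
Qed.

Lemma QYle x : Q [set w | Y w <= x] = (F x)%:E.
Proof.
rewrite /cdf_inf_inv Yle_set fineK //; apply: fin_num_measure.
exact: mset_le Ymeas.
Qed.

Lemma F_nd : {homo F : x y / x <= y}.
Proof.
move=> x y xy; rewrite -lee_fin -!QYle; apply: le_measure; rewrite ?inE.
- exact: mset_le Ymeas.
- exact: mset_le Ymeas.
- by move=> w /= /le_trans; apply.
Qed.

Lemma F_ge0 x : 0 <= F x.
Proof. by rewrite -lee_fin -QYle. Qed.

Lemma F_le1 x : F x <= 1.
Proof. by rewrite -lee_fin -QYle; apply: probability_le1; exact: mset_le Ymeas. Qed.

Lemma F_neg x : x < 0 -> F x = 0.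
Proof.
move=> x0; apply/eqP; rewrite -(@eqe _ _ 0) -QYle.
rewrite (_ : [set w | Y w <= x] = set0) ?measure0 //.
apply/seteqP; split => w //= Yx.
by have := Y_ge0 w; rewrite leNgt (le_lt_trans Yx x0).
Qed.

Lemma F_big a : a < 1 -> exists n : nat, a < F n%:R.
Proof.
move=> a1; apply: contrapT => /forallNP h.
have h' n : F n%:R <= a by rewrite leNgt; apply/negP; exact: h.
pose A n := [set w | Y w <= n%:R].
have mA n : measurable (A n) by exact: mset_le Ymeas.
have cv := @nondecreasing_cvg_mu _ _ _ Q A mA (bigcupT_measurable A mA).
have nd : {homo A : n m / (n <= m)%N >-> (n <= m)%O}.
  move=> n m nm; rewrite subsetEset => w /= /le_trans; apply; by rewrite ler_nat.
have {cv}cv := cv nd.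
have : (Q (\bigcup_n A n) <= a%:E)%E.
  rewrite -(cvg_lim _ cv) //; apply: lime_le; first by apply/cvg_ex; eexists; exact: cv.
  by apply: nearW => n /=; rewrite /A QYle lee_fin.
rewrite (_ : \bigcup_n A n = setT); last first.
  apply/seteqP; split => // w _; exists (Num.Def.archi_bound (Y w)) => //.
  by rewrite /A /= ltW // archi_boundP // Y_ge0.
by rewrite probability_setT lee_fin leNgt a1.
Qed.

Lemma cut_point a : 0 <= a < 1 -> exists c,
  [/\ F c = a, forall y, F y <= a -> y <= c & 0 <= c].
Proof.
move=> /andP[a0 a1].
pose S := [set y | F y <= a].
have [n hn] := F_big a a1.
have hasS : has_sup S.
  split; first by exists (-1); rewrite /S /= F_neg ?ltrN10.
  exists n%:R => y /= Fy; rewrite leNgt; apply/negP => /ltW /F_nd.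
  by move=> /(lt_le_trans hn); rewrite ltNge Fy.
have ub : forall y, F y <= a -> y <= sup S by move=> y Fy; exact: sup_upper_bound.
set c := sup S.
have Fc : F c = a.
  apply/eqP; rewrite eq_le; apply/andP; split.
  - rewrite leNgt; apply/negP => ac.
    have [del del0 hd] := @cont_ball _ F c (F c - a) Hcont (ltac:(by rewrite subr_gt0)).
    have [y Sy ly] := sup_adherent del0 hasS.
    have yc : y <= c := ub y Sy.
    have := hd y; rewrite ger0_norm ?subr_ge0 //.
    move=> /(_ ltac:(rewrite /c; lra)) h.
    have := ler_norm (F c - F y); rewrite /S /= in Sy; lra.
  - rewrite leNgt; apply/negP => ca.
    have [del del0 hd] := @cont_ball _ F c (a - F c) Hcont (ltac:(by rewrite subr_gt0)).
    have Sy : F (c + del / 2) <= a.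
      have := hd (c + del / 2).
      rewrite opprD addrA subrr add0r normrN ger0_norm; last by lra.
      move=> /(_ ltac:(lra)) h; have := ler_norm (F (c + del / 2) - F c).
      rewrite distrC in h; lra.
    have := ub _ Sy; rewrite -/c; lra.
exists c; split => //.
rewrite leNgt; apply/negP => c0.
have := ub (c / 2); rewrite F_neg; last by lra.
move=> /(_ a0); rewrite -/c; lra.
Qed.

Lemma FY_meas : measurable_fun setT (fun w => F (Y w)).
Proof.
apply: measurableT_comp; last exact: Ymeas.
exact: measurable_realfun.nondecreasing_measurable F_nd.
Qed.

Lemma PIT a : 0 <= a <= 1 -> (Q [set w | (F (Y w) <= a)%R] <= a%:E)%E.
Proof.
move=> /andP[a0]; rewrite le_eqVlt => /orP[/eqP ->|a1].
  by apply: probability_le1; exact: mset_le FY_meas.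
have a01 : 0 <= a < 1 by rewrite a0 a1.
have [c [Fc ub c0]] := cut_point a a01.
apply: (@le_trans _ _ (Q [set w | Y w <= c])); last by rewrite QYle Fc.
apply: le_measure; rewrite ?inE.
- exact: mset_le FY_meas.
- exact: mset_le Ymeas.
- by move=> w /= h; exact: (ub _ h).
Qed.

End CDF.


Section Liminf.
Context {d : measure_display} {Omega : measurableType d} {R : realType}.

Lemma liminf_meas (p : nat -> Omega -> R) :
  (forall t, measurable_fun setT (p t)) -> (forall t w, 0 <= p t w <= 1) ->
  measurable_fun setT (fun w => limn_inf (fun t => p t w)).
Proof.
move=> mp p01.
have lb w : has_lbound (range (fun t => p t w)).
  by exists 0 => _ [t _ <-]; have /andP[] := p01 t w.
apply: (measurable_realfun.measurable_fun_cvg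
  (h := fun n w => infs (fun t => p t w) n)).
  by move=> n; apply: measurable_realfun.measurable_fun_infs => // w _.
move=> w _; apply: nondecreasing_is_cvgn; first exact: nondecreasing_infs.
exists 1 => _ [n _ <-]; apply: (@le_trans _ _ (p n w)).
  by apply: ge_inf; [exact: has_lbound_sdrop|exists n => /=].
by have /andP[] := p01 n w.
Qed.

End Liminf.

Section Stop.
Context {d dT : measure_display} {Omega : measurableType d} {T : measurableType dT}
  {R : realType}.
Context (X : nat -> Omega -> T) (U : Omega -> R).
Hypothesis HX : forall t, measurable_fun setT (X t).
Hypothesis HU : measurable_fun setT U.

Lemma tau_some_meas tau s : stopping_time (filt U X) tau ->
  measurable [set w | tau w = Some s].
Proof.
move=> st.
have mT k : measurable [set w | exists s', tau w = Some s' /\ (s' <= k)%N].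
  exact: (filt_meas X U HX HU _ _ (st k)).
case: s => [|s].
  rewrite (_ : [set w | _] = [set w | exists s', tau w = Some s' /\ (s' <= 0)%N]) //.
  apply/seteqP; split => w /=; first by move=> ->; exists 0%N.
  by move=> [s' [-> ]]; rewrite leqn0 => /eqP ->.
rewrite (_ : [set w | _] = [set w | exists s', tau w = Some s' /\ (s' <= s.+1)%N]
   `\` [set w | exists s', tau w = Some s' /\ (s' <= s)%N]).
  exact: measurableD.
apply/seteqP; split => w /=.
  move=> ->; split; first by exists s.+1.
  by move=> [s' [[<-]]]; rewrite ltnn.
move=> [[s' [-> s's]] h]; congr Some; apply/eqP; rewrite eqn_leq s's /=.
by rewrite ltnNge; apply/negP => s's'; apply: h; exists s'.
Qed.

Lemma tau_none_meas tau : stopping_time (filt U X) tau ->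
  measurable [set w | tau w = None].
Proof.
move=> st.
rewrite (_ : [set w | _] = ~` \bigcup_s [set w | tau w = Some s]).
  by apply: measurableC; apply: bigcupT_measurable => s; exact: tau_some_meas.
apply/seteqP; split => w /=.
  by move=> h [s _ /=]; rewrite h.
by case E: (tau w) => [s|] // h; exfalso; apply: h; exists s.
Qed.

Lemma stopped_meas (p : nat -> Omega -> R) tau (alpha : R) :
  stopping_time (filt U X) tau ->
  (forall t, measurable_fun setT (p t)) ->
  measurable_fun setT (fun w => limn_inf (fun t => p t w)) ->
  measurable [set w | stopped p tau w <= alpha].
Proof.
move=> st mp ml.
rewrite (_ : [set w | _] =
  (\bigcup_s ([set w | tau w = Some s] `&` [set w | p s w <= alpha])) `|`
  ([set w | tau w = None] `&` [set w | limn_inf (fun t => p t w) <= alpha])).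
  apply: measurableU.
    apply: bigcupT_measurable => s; apply: measurableI.
      exact: tau_some_meas.
    exact: mset_le.
  apply: measurableI; first exact: tau_none_meas.
  exact: mset_le.
apply/seteqP; split => w /=; rewrite /stopped.
  by case E : (tau w) => [s|] h; [left; exists s|right].
by move=> [[s _ /= [-> h]]|[-> h]].
Qed.

End Stop.


Section Valid.
Context {d dT : measure_display} {Omega : measurableType d} {T : measurableType dT}
  {R : realType} (Q : probability Omega R).
Context (X : nat -> Omega -> T) (U : Omega -> R) (M : nat -> Omega -> R).
Hypothesis HX : forall t, measurable_fun setT (X t).
Hypothesis HU : measurable_fun setT U.
Hypothesis HMw : forall s, measurable_wrt (filt U X s) (M s).
Hypothesis Hnonneg : forall t w, 0 <= M t w.
Hypothesis HM0 : forall w, 0 < M 0%N w.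
Hypothesis Hcont : continuous (cdf_inf_inv Q M).

Local Notation Y := (fun w => fine (inf_inv M w)).
Local Notation G := (fun t w => fine (inf_inv_upto M t w)).
Local Notation F := (cdf_inf_inv Q M).

Let HMm s : measurable_fun setT (M s).
Proof. exact: (wrt_meas X U HX HU _ _ (HMw s)). Qed.

Lemma pval_wrt t : measurable_wrt (filt U X t) (pval Q M t).
Proof.
apply/wrtE; apply: measurableT_comp.
  exact: measurable_realfun.nondecreasing_measurable (F_nd Q M Hnonneg HM0 HMm).
by apply/wrtE; exact: G_wrt.
Qed.

Lemma pval01 t w : 0 <= pval Q M t w <= 1.
Proof. by rewrite /pval F_ge0 // F_le1. Qed.

Lemma pval_liminf w : limn_inf (fun t => pval Q M t w) = F (Y w).
Proof.
apply: (cvg_limn_inf_sup _).1.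
exact: (cvg_comp _ _ (G_cvg M Hnonneg HM0 w) (Hcont _)).
Qed.

Lemma pval_meas t : measurable_fun setT (pval Q M t).
Proof. exact: (wrt_meas X U HX HU _ _ (pval_wrt t)). Qed.

Lemma stopped_ge tau w : F (Y w) <= stopped (pval Q M) tau w.
Proof.
rewrite /stopped; case: (tau w) => [t|]; last by rewrite pval_liminf.
by apply: F_nd => //; exact: Y_le_G.
Qed.

Lemma valid : anytime_valid Q (filt U X) (pval Q M).
Proof.
split; first exact: pval_wrt.
split; first exact: pval01.
move=> tau st alpha a01.
apply: (le_trans _ (PIT Q M Hnonneg HM0 HMm Hcont alpha a01)).
apply: le_measure; rewrite ?inE.
- apply: (stopped_meas X U HX HU) => //; first exact: pval_meas.
  rewrite (_ : (fun w => _) = (fun w => F (Y w))); last first.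
    by apply/funext => w; exact: pval_liminf.
  exact: FY_meas.
- exact: mset_le (FY_meas Q M Hnonneg HM0 HMm).
- by move=> w /= h; apply: le_trans h; exact: stopped_ge.
Qed.

End Valid.


Section Maximal.
Context {d dT : measure_display} {Omega : measurableType d} {TT : measurableType dT}
  {R : realType} (Q : probability Omega R).
Context (X : nat -> Omega -> TT) (U : Omega -> R) (M : nat -> Omega -> R).
Hypothesis HX : forall t, measurable_fun setT (X t).
Hypothesis HU : measurable_fun setT U.
Hypothesis HMw : forall s, measurable_wrt (filt U X s) (M s).
Hypothesis Hnonneg : forall t w, 0 <= M t w.
Hypothesis Hmg : forall t A, filt U X t A ->
  (\int[Q]_(w in A) (M t.+1 w)%:E = \int[Q]_(w in A) (M t w)%:E)%E.

Lemma filt_gt s k (b : R) : (s <= k)%N -> filt U X k [set w | b < M s w].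
Proof.
move=> sk; have := wrt_mono X U _ _ _ sk (HMw s) _ (@measurable_itv _ `]b, +oo[).
suff -> : M s @^-1` `]b, +oo[ = [set w | b < M s w] by [].
by apply/seteqP; split => w /=; rewrite in_itv /= andbT.
Qed.

Let HMm s : measurable_fun setT (M s).
Proof. exact: (wrt_meas X U HX HU _ _ (HMw s)). Qed.

Let mEM s (D : set Omega) : measurable_fun D (EFin \o M s).
Proof. by apply/measurable_realfun.measurable_EFinP; exact: measurable_funTS. Qed.

Context (A : set Omega) (t : nat) (b : R).
Hypothesis hA : filt U X t A.
Hypothesis b0 : 0 < b.

Fixpoint Hs (k : nat) : set Omega :=
  match k with
  | 0%N => A `&` [set w | b < M t w]
  | k.+1 => Hs k `|` ((A `\` Hs k) `&` [set w | b < M (t + k.+1) w])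
  end.

Lemma Hs_filt k : filt U X (t + k) (Hs k).
Proof.
elim: k => [|k IH] /=.
  have hg : filt U X t [set w | b < M t w] by exact: filt_gt.
  have hA0 := hA; by rewrite addn0 filtE in hA0 hg *; apply: measurableI.
have hA' : filt U X (t + k.+1) A by apply: filt_mono hA; rewrite leq_addr.
have IH' : filt U X (t + k.+1) (Hs k) by apply: filt_mono IH; rewrite leq_add2l.
have hg : filt U X (t + k.+1) [set w | b < M (t + k.+1) w] by exact: filt_gt.
rewrite filtE in hA' IH' hg *.
by apply: measurableU => //; apply: measurableI => //; exact: measurableD.
Qed.

Lemma mA : measurable A.
Proof. exact: (filt_meas X U HX HU _ _ hA). Qed.

Lemma mHs k : measurable (Hs k).
Proof. exact: (filt_meas X U HX HU _ _ (Hs_filt k)). Qed.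

Lemma Hs_sub k : Hs k `<=` A.
Proof. by elim: k => [|k IH] /= w; [case|case=> [/IH|[[]]]]. Qed.

Lemma mAD k : measurable (A `\` Hs k).
Proof. by apply: measurableD; [exact: mA|exact: mHs]. Qed.

Lemma intU (s : nat) (B C : set Omega) : measurable B -> measurable C ->
  B `&` C = set0 ->
  (\int[Q]_(w in B `|` C) (M s w)%:E =
   \int[Q]_(w in B) (M s w)%:E + \int[Q]_(w in C) (M s w)%:E)%E.
Proof.
move=> mB mC BC; apply: ge0_integral_setU => //.
- exact: mEM.
- by move=> w _; rewrite lee_fin.
- by apply/disj_setPS; rewrite BC.
Qed.

Lemma intge (s : nat) (B : set Omega) : measurable B ->
  (forall w, B w -> b < M s w) ->
  (b%:E * Q B <= \int[Q]_(w in B) (M s w)%:E)%E.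
Proof.
move=> mB h; rewrite -integral_cst //.
apply: ge0_le_integral.
- exact: mB.
- by move=> w _ /=; rewrite lee_fin ltW.
- exact: measurable_cst.
- exact: mEM.
- by move=> w /h /= ?; rewrite lee_fin ltW.
Qed.

Lemma claim k : (b%:E * Q (Hs k) + \int[Q]_(w in A `\` Hs k) (M (t + k) w)%:E
   <= \int[Q]_(w in A) (M t w)%:E)%E.
Proof.
elim: k => [|k IH].
  rewrite addn0 -{2}(setDUK (Hs_sub 0)) intU //; last 3 first.
  - exact: mHs.
  - exact: mAD.
  - by apply/seteqP; split => // w [? []].
  apply: leeD2r; apply: intge; first exact: mHs.
  by move=> w [].
apply: le_trans IH.
set D := (A `\` Hs k) `&` [set w | b < M (t + k.+1) w].
have mD : measurable D.
  apply: measurableI; first exact: mAD.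
  by apply: mset_gt; exact: HMm.
have ADk : A `\` (Hs k `|` D) = (A `\` Hs k) `\` D.
  apply/seteqP; split => w /=.
    by move=> [Aw /not_orP [nH nD]]; split.
  by move=> [[Aw nH] nD]; split => // -[].
rewrite /= -/D measureU //; last 2 first.
- exact: mHs.
- by apply/seteqP; split => // w [h [[_ ]]].
rewrite ge0_muleDr ?measure_ge0 // -addeA; apply: leeD2l.
have -> : (\int[Q]_(w in A `\` Hs k) (M (t + k) w)%:E =
    \int[Q]_(w in A `\` Hs k) (M (t + k.+1) w)%:E)%E.
  rewrite addnS Hmg //; rewrite filtE; apply: measurableD; rewrite -filtE.
    by apply: filt_mono hA; rewrite leq_addr.
  exact: Hs_filt.
have DS : D `<=` A `\` Hs k by move=> w [].
rewrite -{1}(setDUK DS) intU //; last first.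
all: try (by apply: measurableD => //; exact: mAD).
all: try (by apply/seteqP; split => // w [? []]).
rewrite ADk; apply: leeD2r; apply: intge => //.
by move=> w [].
Qed.

Lemma maximal : (b%:E * Q (A `&` [set w | exists2 s, (t <= s)%N & (b < M s w)%R])
  <= \int[Q]_(w in A) (M t w)%:E)%E.
Proof.
have cl k : (b%:E * Q (Hs k) <= \int[Q]_(w in A) (M t w)%:E)%E.
  apply: le_trans (claim k); apply: leeDl.
  by apply: integral_ge0 => w _; rewrite lee_fin.
have sub : A `&` [set w | exists2 s, (t <= s)%N & b < M s w] `<=` \bigcup_k Hs k.
  move=> w [Aw [s ts bs]]; exists (s - t)%N => //.
  have sE : s = (t + (s - t))%N by rewrite subnKC.
  move: sE; case: (s - t)%N => [|j] sE /=.
    by rewrite addn0 in sE; subst s; split.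
  case: (pselect (Hs j w)) => h; [by left|right; split => //].
  by rewrite /= -sE.
have mU : measurable (\bigcup_k Hs k) by exact: bigcupT_measurable mHs.
apply: (@le_trans _ _ (b%:E * Q (\bigcup_k Hs k))%E).
  apply: lee_wpmul2l; first by rewrite lee_fin ltW.
  apply: le_measure; rewrite ?inE //.
  apply: measurableI; first exact: mA.
  rewrite (_ : [set w | _] = \bigcup_(s in [set s | (t <= s)%N]) [set w | b < M s w]).
    by apply: bigcup_measurable => s _; apply: mset_gt; exact: HMm.
  by apply/seteqP; split => w /= [s ts h]; exists s.
have nd : {homo Hs : n m / (n <= m)%N >-> (n <= m)%O}.
  apply/nondecreasing_seqP => n; rewrite subsetEset => w /= h; by left.
have cv := @nondecreasing_cvg_mu _ _ _ Q Hs mHs mU nd.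
have cv2 := @cvgeZl _ _ _ _ _ (b%:E) (ltac:(by [])) cv.
rewrite -(cvg_lim _ cv2) //; apply: lime_le; first by apply/cvg_ex; eexists; exact: cv2.
by apply: nearW => k /=; exact: cl.
Qed.

End Maximal.


Section Helpers.
Context {R : realType}.

Lemma liminf_le (u v : nat -> R) (l : R) : (forall t, 0 <= u t <= 1) ->
  v @ \oo --> l -> (forall t, u t <= v t) -> limn_inf u <= l.
Proof.
move=> u01 cv uv.
have lb : has_lbound (range u) by exists 0 => _ [t _ <-]; have /andP[] := u01 t.
have ci : cvgn (infs u).
  apply: nondecreasing_is_cvgn; first exact: nondecreasing_infs.
  exists 1 => _ [n _ <-]; apply: (@le_trans _ _ (u n)).
    by apply: ge_inf; [exact: has_lbound_sdrop|exists n => /=].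
  by have /andP[] := u01 n.
rewrite /limn_inf; apply: limr_le => //; apply: nearW => n.
rewrite -(cvg_lim _ cv) //; apply: limr_ge; first by apply/cvg_ex; exists l.
exists n => // m /= nm; apply: le_trans (uv m).
by apply: ge_inf; [exact: has_lbound_sdrop|exists m].
Qed.

Lemma archi_inv (e : R) : 0 < e -> exists n : nat, n.+1%:R^-1 < e.
Proof.
move=> e0; exists (Num.Def.archi_bound e^-1).
rewrite invf_plt ?posrE ?ltr0Sn //.
apply: (lt_le_trans (archi_boundP _)); first by rewrite invr_ge0 ltW.
by rewrite ler_nat.
Qed.

End Helpers.

Section PosBigcup.
Context {d : measure_display} {Omega : measurableType d} {R : realType}.
Context (Q : probability Omega R).

Lemma pos_bigcup (F : nat -> set Omega) : (forall n, measurable (F n)) ->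
  (0 < Q (\bigcup_n F n))%E -> exists n, (0 < Q (F n))%E.
Proof.
move=> mF h; apply: contrapT => /forallNP hn.
have F0 n : Q (F n) = 0%E.
  by apply/eqP; rewrite eq_le measure_ge0 andbT leNgt; apply/negP; exact: hn.
have : Q.-negligible (\bigcup_n F n).
  by apply: negligible_bigcup => n; exists (F n); split => //; exact: F0.
move=> [N [mN N0 sub]].
have := le_measure Q (mem_set (bigcupT_measurable _ mF)) (mem_set mN) sub.
move=> h2; have h3 := lt_le_trans h h2.
by move: (eq_ind _ (fun z => (0 < z)%E) h3 _ N0); rewrite ltxx.
Qed.

End PosBigcup.


Section Admis.
Context {d dT : measure_display} {Omega : measurableType d} {TT : measurableType dT}
  {R : realType} (Q : probability Omega R).
Context (X : nat -> Omega -> TT) (U : Omega -> R) (M : nat -> Omega -> R).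
Hypothesis HX : forall t, measurable_fun setT (X t).
Hypothesis HU : measurable_fun setT U.
Hypothesis HMw : forall s, measurable_wrt (filt U X s) (M s).
Hypothesis Hnonneg : forall t w, 0 <= M t w.
Hypothesis HM0 : forall w, 0 < M 0%N w.
Hypothesis Hcont : continuous (cdf_inf_inv Q M).
Hypothesis Hmg : forall t A, filt U X t A ->
  (\int[Q]_(w in A) (M t.+1 w)%:E = \int[Q]_(w in A) (M t w)%:E)%E.

Local Notation Y := (fun w => fine (inf_inv M w)).
Local Notation G := (fun t w => fine (inf_inv_upto M t w)).
Local Notation F := (cdf_inf_inv Q M).
Local Notation p := (pval Q M).

Let HMm s : measurable_fun setT (M s).
Proof. exact: (wrt_meas X U HX HU _ _ (HMw s)). Qed.

Lemma wrt_set_le t (f : Omega -> R) x : measurable_wrt (filt U X t) f ->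
  filt U X t [set w | f w <= x].
Proof.
move=> h; have := h _ (@measurable_itv _ `]-oo, x]).
suff -> : f @^-1` `]-oo, x] = [set w | f w <= x] by [].
by apply/seteqP; split => w /=; rewrite in_itv.
Qed.

Lemma wrt_set_gt t (f : Omega -> R) x : measurable_wrt (filt U X t) f ->
  filt U X t [set w | x < f w].
Proof.
move=> h; have := h _ (@measurable_itv _ `]x, +oo[).
suff -> : f @^-1` `]x, +oo[ = [set w | x < f w] by [].
by apply/seteqP; split => w /=; rewrite in_itv /= andbT.
Qed.

Lemma filtI t (A B : set Omega) : filt U X t A -> filt U X t B -> filt U X t (A `&` B).
Proof. by rewrite !filtE; exact: measurableI. Qed.

Lemma admis : admissible Q (filt U X) p.
Proof.
move=> [p' [[p'w [p'01 p'v]] [hle [t0 hpos]]]].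
have p'm t : measurable_fun setT (p' t) := wrt_meas X U HX HU _ _ (p'w t).
have pw t : measurable_wrt (filt U X t) (p t).
  exact: (pval_wrt Q X U M HX HU HMw Hnonneg HM0).
have pm t : measurable_fun setT (p t) := wrt_meas X U HX HU _ _ (pw t).
have Gw t : measurable_wrt (filt U X t) (G t).
  exact: (G_wrt X U M Hnonneg HM0 HMw).
have Gm t : measurable_fun setT (G t) := wrt_meas X U HX HU _ _ (Gw t).
pose B n k := [set w | p' t0 w <= k%:R / n.+1%:R] `&` [set w | k%:R / n.+1%:R < p t0 w].
have mB n k : measurable (B n k).
  by apply: measurableI; [apply: mset_le|apply: mset_gt].
have [n [k Bpos]] : exists n k, (0 < Q (B n k))%E.
  have sub : [set w | p' t0 w < p t0 w] `<=` \bigcup_n \bigcup_k B n k.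
    move=> w /= h.
    have [n hn] := @archi_inv _ (p t0 w - p' t0 w) (ltac:(by rewrite subr_gt0)).
    exists n => //; exists (Num.Def.trunc (p' t0 w * n.+1%:R)).+1 => //.
    have N0 : 0 < n.+1%:R :> R by rewrite ltr0Sn.
    have p'0 : 0 <= p' t0 w by have /andP[] := p'01 t0 w.
    have /andP[t1 t2] := truncn_itv (mulr_ge0 p'0 (ltW N0)).
    have h1 : 1 < (p t0 w - p' t0 w) * n.+1%:R by rewrite -ltr_pdivrMr // div1r.
    rewrite mulrBl in h1.
    split => /=.
      by rewrite ler_pdivlMr //; apply: ltW.
    rewrite ltr_pdivrMr //; rewrite -addn1 natrD in t1 t2 *; lra.
  have mlt : measurable [set w | p' t0 w < p t0 w].
    rewrite (_ : [set w | _] = [set w | (p' t0 \- p t0) w < 0]).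
      by apply: mset_lt; exact: measurable_funB.
    by apply/seteqP; split => w /=; rewrite subr_lt0.
  have mBk n : measurable (\bigcup_k B n k) by exact: bigcupT_measurable.
  have := le_measure Q (mem_set mlt) (mem_set (bigcupT_measurable _ mBk)) sub.
  move=> /(lt_le_trans hpos) /(pos_bigcup Q _ mBk) [n] /(pos_bigcup Q _ (mB n)) [k hk].
  by exists n, k.
pose a := k%:R / n.+1%:R : R.
have a0 : 0 <= a by rewrite /a divr_ge0.
have [w0 Bw0] : exists w, B n k w.
  apply: contrapT => /forallNP h.
  move: Bpos; rewrite (_ : B n k = set0) ?measure0 ?ltxx //.
  by apply/seteqP; split => // w /h.
have p01 t w : 0 <= p t w <= 1.
  by rewrite /pval (F_ge0 Q M Hnonneg HM0 HMm) (F_le1 Q M Hnonneg HM0 HMm).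
have a1 : a < 1.
  case: Bw0 => _ /= h; apply: lt_le_trans h _; by have /andP[] := p01 t0 w0.
have a01 : 0 <= a < 1 by rewrite a0 a1.
have [c [Fc ub c0]] := cut_point Q M Hnonneg HM0 HMm Hcont a a01.
have GcB w : B n k w -> c < G t0 w.
  move=> [_ /= h]; rewrite ltNge; apply/negP => /(F_nd Q M Hnonneg HM0 HMm).
  by rewrite Fc => h2; move: h; rewrite /pval ltNge h2.
pose Am m := B n k `&` [set w | c + m.+1%:R^-1 < G t0 w].
have mAm m : measurable (Am m) by apply: measurableI => //; apply: mset_gt.
have [m Apos] : exists m, (0 < Q (Am m))%E.
  apply: (pos_bigcup Q _ mAm); apply: (lt_le_trans Bpos).
  apply: le_measure; rewrite ?inE //; first exact: bigcupT_measurable.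
  move=> w Bw.
  have [m hm] := @archi_inv _ (G t0 w - c) (ltac:(by rewrite subr_gt0 GcB)).
  by exists m => //; split => //=; move: hm; set x := m.+1%:R^-1; lra.
pose del := m.+1%:R^-1 : R.
have del0 : 0 < del by rewrite invr_gt0 ltr0Sn.
pose A := Am m.
have hA : filt U X t0 A.
  apply: filtI; first apply: filtI.
  - exact: wrt_set_le.
  - exact: wrt_set_gt.
  - exact: wrt_set_gt.
have mA : measurable A := mAm m.
pose b := (c + del / 2)^-1.
have b0 : 0 < b by rewrite invr_gt0; lra.
have MI : (b%:E * Q (A `&` [set w | exists2 s, (t0 <= s)%N & (b < M s w)%R])
    <= \int[Q]_(w in A) (M t0 w)%:E)%E.
  exact: (maximal Q X U M HX HU HMw Hnonneg Hmg A t0 b hA b0).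
have IB : (\int[Q]_(w in A) (M t0 w)%:E <= ((c + del)^-1)%:E * Q A)%E.
  rewrite -integral_cst //; apply: ge0_le_integral.
  - exact: mA.
  - by move=> w _; rewrite lee_fin.
  - exact/measurable_EFinP/measurable_funTS.
  - exact: measurable_cst.
  - move=> w [_ /= hG]; rewrite -/del in hG; rewrite lee_fin.
    rewrite leNgt; apply/negP => hM.
    have : G t0 w < c + del.
      apply/(inf_inv_upto_ltP M Hnonneg HM0); exists t0; split => //.
      by apply/pos_inv_iff => //; split => //; lra.
    lra.
have sub2 : A `&` [set w | Y w <= c] `<=`
    A `&` [set w | exists2 s, (t0 <= s)%N & (b < M s w)%R].
  move=> w [Aw /= Yc]; split => //.
  have [s [Ms hs]] : exists s, M s w != 0 /\ (M s w)^-1 < c + del / 2.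
    by apply/(inf_inv_ltP M Hnonneg HM0); lra.
  exists s.
  - rewrite leqNgt; apply/negP => st0.
    have : G t0 w < c + del / 2.
      by apply/(inf_inv_upto_ltP M Hnonneg HM0); exists s; split => //; exact: ltnW.
    by case: Aw => _ /= hG; rewrite -/del in hG; lra.
  - by have [] := (pos_inv_iff (M s w) (c + del / 2) (Hnonneg s w)).1 (conj Ms hs).
pose tau w := if pselect (A w) then Some t0 else None.
have st : stopping_time (filt U X) tau.
  move=> s; case: (leqP t0 s) => ts.
    rewrite (_ : [set w | _] = A); first exact: filt_mono ts _ hA.
    apply/seteqP; split => w /=; rewrite /tau; case: pselect => // Aw.
    - by move=> [s' []].
    - by move=> _; exists t0.
  rewrite (_ : [set w | _] = set0); first by rewrite filtE; exact: measurable0.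
  apply/seteqP; split => w //=; rewrite /tau; case: pselect => Aw [s' [//]].
  by move=> [<-]; rewrite leqNgt ts.
have mle s : measurable [set w | p' s w <= p s w].
  rewrite (_ : [set w | _] = [set w | (p' s \- p s) w <= 0]).
    by apply: mset_le; exact: measurable_funB.
  by apply/seteqP; split => w /=; rewrite subr_le0.
pose O0 := \bigcap_s [set w | p' s w <= p s w].
have mO0 : measurable O0 by exact: bigcapT_measurable.
have QO0c : Q (~` O0) = 0%E.
  rewrite setC_bigcap; apply/eqP; rewrite eq_le measure_ge0 andbT leNgt.
  apply/negP => /(pos_bigcup Q _ (fun s => measurableC (mle s))) [s].
  by rewrite probability_setC // hle subee // ltxx.
have key w : O0 w -> (A w \/ Y w <= c) -> stopped p' tau w <= a.
  move=> Ow; rewrite /stopped /tau; case: pselect => [Aw _|nAw [//|Yc]].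
    by case: Aw => [[/= ? _] _].
  apply: (@le_trans _ _ (F (Y w))).
    apply: liminf_le.
    - by move=> t; exact: p'01.
    - exact: (cvg_comp _ _ (G_cvg M Hnonneg HM0 w) (Hcont _)).
    - by move=> t; exact: Ow.
  by rewrite -Fc; apply: (F_nd Q M Hnonneg HM0 HMm).
have a01' : 0 <= a <= 1 by rewrite a0 ltW.
have mS : measurable [set w | stopped p' tau w <= a].
  apply: (stopped_meas X U HX HU) => //.
  exact: liminf_meas.
have QS := p'v tau st a a01'.
pose Yc := [set w | Y w <= c].
have mYc : measurable Yc by apply: mset_le; exact: (Y_meas M Hnonneg HM0 HMm).
have mC : measurable (A `|` Yc) by exact: measurableU.
have QC : (Q (A `|` Yc) <= a%:E)%E.
  apply: le_trans QS.
  apply: (@le_trans _ _ (Q ((A `|` Yc) `&` O0) + Q (~` O0))%E).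
    apply: le_trans (measureU2 Q _ _); last 2 first.
    - exact: measurableI.
    - exact: measurableC.
    apply: le_measure; rewrite ?inE //.
    - by apply: measurableU; [exact: measurableI|exact: measurableC].
    - move=> w Cw; case: (pselect (O0 w)) => Ow; [by left|by right].
  rewrite QO0c adde0; apply: le_measure; rewrite ?inE //.
  - exact: measurableI.
  - by move=> w [Cw Ow] /=; apply: key.
have QCE : Q (A `|` Yc) = (a%:E + Q (A `\` Yc))%E.
  rewrite (_ : A `|` Yc = Yc `|` (A `\` Yc)); last first.
    apply/seteqP; split => w /=.
      by move=> [Aw|Yw]; [case: (pselect (Yc w)) => h; [left|right]|left].
    by move=> [Yw|[Aw _]]; [right|left].
  rewrite measureU //.
  - rewrite /Yc; congr (_ + _)%E; rewrite -Fc; exact: (QYle Q M Hnonneg HM0 HMm).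
  - exact: measurableD.
  - by apply/seteqP; split => // w [? []].
have QAE : Q A = (Q (A `&` Yc) + Q (A `\` Yc))%E.
  rewrite -measureU //.
  - congr (Q _); apply/seteqP; split => w /=.
      by move=> Aw; case: (pselect (Yc w)) => h; [left|right].
    by move=> [[]|[]].
  - exact: measurableI.
  - exact: measurableD.
  - by apply/seteqP; split => // w [[? ?] []].
have AD0 : Q (A `\` Yc) = 0%E.
  apply/eqP; rewrite eq_le measure_ge0 andbT.
  by move: QC; rewrite QCE -{2}(adde0 a%:E) leeD2lE.
have QA : Q A = Q (A `&` Yc) by rewrite QAE AD0 adde0.
have h : (b%:E * Q A <= ((c + del)^-1)%:E * Q A)%E.
  rewrite {1}QA; apply: le_trans IB; apply: le_trans MI.
  apply: lee_wpmul2l; first by rewrite lee_fin ltW.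
  apply: le_measure; rewrite ?inE //; first exact: measurableI.
  apply: measurableI => //.
  rewrite (_ : [set w | _] = \bigcup_(s in [set s | (t0 <= s)%N]) [set w | b < M s w]).
    by apply: bigcup_measurable => s _; apply: mset_gt; exact: HMm.
  by apply/seteqP; split => w /= [s ts h]; exists s.
have QAf : Q A = (fine (Q A))%:E by rewrite fineK // fin_num_measure.
have QA0 : 0 < fine (Q A) by rewrite -lte_fin -QAf.
move: h; rewrite QAf -!EFinM lee_fin ler_pM2r // /b.
rewrite lef_pV2 ?posrE; [lra|lra|lra].
Qed.

End Admis.

Theorem corollary1 (d dT : measure_display) (Omega : measurableType d)
  (T : measurableType dT) (R : realType) (Q : probability Omega R)
  (X : nat -> Omega -> T) (U : Omega -> R)
  (HX : forall t, measurable_fun setT (X t)) (HU : measurable_fun setT U)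
  (HUunif : uniform01 Q U) (HUind : indep_U_X Q U X)
  (M : nat -> Omega -> R)
  (Hmart : martingale Q (filt U X) M)
  (Hnonneg : forall t w, 0 <= M t w)
  (HM0 : forall w, 0 < M 0%N w)
  (Hcont : continuous (cdf_inf_inv Q M)) :
  anytime_valid Q (filt U X) (pval Q M) /\ admissible Q (filt U X) (pval Q M).
Proof.
have HMw s : measurable_wrt (filt U X s) (M s) := (Hmart s).1.
have Hmg t A : filt U X t A ->
    (\int[Q]_(w in A) (M t.+1 w)%:E = \int[Q]_(w in A) (M t w)%:E)%E.
  by move=> hA; exact: ((Hmart t).2.2 A hA).
split; first exact: (valid Q X U M HX HU HMw Hnonneg HM0 Hcont).
exact: (admis Q X U M HX HU HMw Hnonneg HM0 Hcont Hmg).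
Qed.
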